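(* Let $f$ be a strategy-proof SCF and $G$ a gradual mechanism implementing $f$. Then $G$ is incentive compatible if and only if $G$ is reaction-proof.
   Context: Setting. $N$ finite set of agents, $X$ finite set of outcomes, finite type spaces $\Theta_i$, each type $\theta_i$ inducing a complete transitive preference $R(\theta_i)$ on $X$; $\Theta=\prod_i\Theta_i$. An SCF $f:\Theta\to X$ is strategy-proof if $f(\theta_i,\theta_{-i})\,R(\theta_i)\,f(\theta_i',\theta_{-i})$ for all $i,\theta_i,\theta_i',\theta_{-i}$. Dynamic game forms. A dynamic game form with perfect recall consists of a finite tree $\bar H$ of histories (finite sequences of action profiles) containing the empty initial history $\varnothing$, closed under prefixes ($\preceq$ prefix order, $\prec$ strict); terminal histories $Z$, non-terminal $H$; at each $h\in H$ a nonempty set $\mathbb P(h)$ of agents move simultaneously with available actions $A_i(h)$, all action profiles leading to successors; $\mathbb P(\varnothing)=N$; each agent's decision nodes $H_i$ are partitioned into information sets $\boldsymbol H_i$, with available actions constant on information sets and perfect recall; $\mathcal X:Z\to X$. For information sets of $i$, $\boldsymbol h_i\prec\bar{\boldsymbol h}_i$ if $h\prec\bar h$ for some $h\in\boldsymbol h_i,\bar h\in\bar{\boldsymbol h}_i$; $\bar{\boldsymbol h}_i$ is an immediate successor of $\boldsymbol h_i$ if $\boldsymbol h_i\prec\bar{\boldsymbol h}_i$ and no information set of $i$ lies strictly between them. Strategies choose an available action at each information set; $s_M$ denotes a profile for agents in $M$ ($s_{-i}$, $s_{-i,j}$ for agents other than $i$, other than $i,j$); a complete profile $s$ determines $z(s)$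 and $\mathcal X(s)=\mathcal X(z(s))$. Gradual mechanisms. A GM implementing $f$ is such a game form in which (1) actions of $i$ are nonempty subsets of $\Theta_i$; (2) at every $h\in H_i$ the available actions of $i$ are pairwise disjoint with union $\Theta_i(h)$, where for any history $h$, $\Theta_i(h)$ is the last action of $i$ in $h$ ($\Theta_i$ if $i$ has not acted); (3) $\mathcal X(z)=f(\theta)$ for all $z\in Z$, $\theta\in\Theta(z)=\prod_i\Theta_i(z)$. For a history $h$, $\Theta(h)=\prod_i\Theta_i(h)$; for an information set, $\Theta_i(\boldsymbol h_i)=\Theta_i(h)$ for $h\in\boldsymbol h_i$. Consistency. A history $h$ is consistent with $s_M$ ($M\subsetneq N$) if $h\preceq z(s_M,s_{N\setminus M})$ for some $s_{N\setminus M}$; a type profile $\theta$ is consistent with $s_M$ if the unique $z\in Z$ with $\theta\in\Theta(z)$ is. Incentive compatibility. $s_i$ is unconditional for $\theta_i$ if $\theta_i\in s_i(h)$ for every $h\in H_i$ with $\theta_i\in\Theta_i(h)$ (denoted $s_{\theta_i}$). The GM is incentive compatible if $\mathcal X(s_{\theta_i},s_{-i})\,R(\theta_i)\,\mathcal X(s_i,s_{-i})$ for all $i,\theta_i$, unconditional $s_{\theta_i}$, $s_i$, $s_{-i}$. Reaction-proofness. A GM $G$ implementing $f$ is reaction-proof if for any two distinct agents $i,j\in N$, any pair of distinct information sets $\boldsymbol h_i^1,\boldsymbol h_i^2$ of $i$ that are immediate successors of a common information set $\boldsymbol h_i$ of $i$ with $\Theta_i(\boldsymbol h_i^1)=\Theta_i(\boldsymbol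 h_i^2)$, and any histories $h^1\in\boldsymbol h_i^1$, $h^2\in\boldsymbol h_i^2$ that are both consistent with a common strategy profile $s_{-i,j}$, we have $f(\theta^1)\,R(\theta_j^1)\,f(\theta^2)$ for all $\theta^1\in\Theta(h^1)$ and $\theta^2\in\Theta(h^2)$ that are consistent with $s_{-i,j}$. *)

(* Defs.v *)
From mathcomp Require Import all_boot.
Set Implicit Arguments. Unset Strict Implicit. Unset Printing Implicit Defensive.

Section GradualMechanisms.
Variables (Agent : finType) (Theta : Agent -> finType) (X : finType).

Definition tprofile := forall i : Agent, Theta i.

(* An action profile at a history: for each agent, Some action (a nonempty
   subset of Theta_i) if the agent moves there, None otherwise. *)
Definition aprofile := {dffun forall i : Agent, option {set Theta i}}.

Definition history := seq aprofile.

(* A (candidate) dynamic game form with set-valued actions: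
   - tree   : the finite set of histories Hbar
   - mover  : P(h)
   - avail  : A_i(h)
   - info   : information-set label of i at h (h, h' in H_i lie in the same
              information set of i iff their labels agree)
   - outc   : the outcome function (relevant on terminal histories). *)
Record game := Game {
  tree : seq history;
  mover : history -> {set Agent};
  avail : history -> forall i : Agent, {set {set Theta i}};
  info : forall i : Agent, history -> nat;
  outc : history -> X }.

Variable G : game.

Definition terminal (h : history) : bool :=
  (h \in tree G) && [forall a : aprofile, rcons h a \notin tree G].
Definition nonterminal (h : history) : bool :=
  (h \in tree G) && [exists a : aprofile, rcons h a \in tree G].
Definition dnode (i : Agent) (h : history) : bool :=
  nonterminal h && (i \in mover G h).

Definition valid_aprofile (h : history) (a : aprofile) : bool :=
  [forall i, if i \in mover G h
             then (if a i is Some x then x \in avail G h i else false)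
             else a i == None].

(* i's experience along h: the (information set, action) pairs of i
   at the proper prefixes of h where i moves. *)
Definition prefixes (h : history) : seq history :=
  [seq take k h | k <- iota 0 (size h)].
Definition experience (i : Agent) (h : history) : seq (nat * option {set Theta i}) :=
  map (fun p : history * aprofile => (info G i p.1, (p.2 : aprofile) i))
      (filter (fun p : history * aprofile => i \in mover G p.1) (zip (prefixes h) h)).

Definition is_game_form : Prop :=
  [::] \in tree G /\
  (forall h a, rcons h a \in tree G -> h \in tree G) /\
  mover G [::] = setT /\
  (forall h, nonterminal h -> mover G h != set0) /\
  (forall h, nonterminal h -> forall a, (rcons h a \in tree G) = valid_aprofile h a) /\
  (forall i h, dnode i h -> avail G h i != set0) /\
  (forall i h h', dnode i h -> dnode i h' -> info G i h = info G i h' ->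
      avail G h i = avail G h' i) /\
      (forall i h h', dnode i h -> dnode i h' -> info G i h = info G i h' ->
          experience i h = experience i h').

Definition thetai (h : history) (i : Agent) : {set Theta i} :=
  foldl (fun acc (a : aprofile) => if a i is Some x then x else acc) setT h.

Definition in_Theta (h : history) (th : tprofile) : Prop :=
  forall i, th i \in thetai h i.

Definition is_GM (f : tprofile -> X) : Prop :=
  [/\ is_game_form,
      (forall i h, dnode i h -> forall A, A \in avail G h i -> A != set0),
      (forall i h, dnode i h -> forall A B, A \in avail G h i -> B \in avail G h i ->
          A != B -> [disjoint A & B]),
      (forall i h, dnode i h -> \bigcup_(A in avail G h i) A = thetai h i)
    & (forall z th, terminal z -> in_Theta z th -> outc G z = f th)].

(* Strategies: a choice of action for each information set (label) of i. *)
Definition strat (i : Agent) := nat -> {set Theta i}.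
Definition sprofile := forall i : Agent, strat i.

Definition valid_strat (i : Agent) (s : strat i) : Prop :=
  forall h, dnode i h -> s (info G i h) \in avail G h i.
Definition valid_sprofile (s : sprofile) : Prop := forall i, valid_strat (s i).

Definition act_of (s : sprofile) (h : history) : aprofile :=
  [ffun i => if i \in mover G h then Some (s i (info G i h)) else None].
Definition step (s : sprofile) (h : history) : history :=
  if nonterminal h then rcons h (act_of s h) else h.
(* z(s): the play of s (the tree depth is < size (tree G)). *)
Definition play (s : sprofile) : history := iter (size (tree G)) (step s) [::].
Definition outcome (s : sprofile) : X := outc G (play s).

Definition consistent_h (M : {set Agent}) (s : sprofile) (h : history) : Prop :=
  exists t : sprofile, [/\ valid_sprofile t, (forall j, j \in M -> s j =1 t j)
                       & prefix h (play t)].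
Definition consistent_theta (M : {set Agent}) (s : sprofile) (th : tprofile) : Prop :=
  exists z, [/\ terminal z, in_Theta z th & consistent_h M s z].

Definition unconditional (i : Agent) (ti : Theta i) (si : strat i) : Prop :=
  forall h, dnode i h -> ti \in thetai h i -> ti \in si (info G i h).

Variable R : forall i : Agent, Theta i -> rel X.

Definition incentive_compatible : Prop :=
  forall (i : Agent) (ti : Theta i) (s s' : sprofile),
    valid_sprofile s -> valid_sprofile s' ->
    (forall j, j != i -> s j =1 s' j) ->
    unconditional ti (s i) ->
    @R i ti (outcome s) (outcome s').

Definition in_infoset (i : Agent) (k : nat) (h : history) : bool :=
  dnode i h && (info G i h == k).
Definition iprec (i : Agent) (k k' : nat) : Prop :=
  exists h h', [/\ in_infoset i k h, in_infoset i k' h', prefix h h' & h != h'].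
Definition imm_succ (i : Agent) (k k' : nat) : Prop :=
  iprec i k k' /\ ~ (exists k'', iprec i k k'' /\ iprec i k'' k').

Definition reaction_proof (f : tprofile -> X) : Prop :=
  forall (i j : Agent), i != j ->
  forall (k k1 k2 : nat) (h1 h2 : history) (s : sprofile),
    let M := setT :\ i :\ j in
    k1 != k2 -> imm_succ i k k1 -> imm_succ i k k2 ->
    in_infoset i k1 h1 -> in_infoset i k2 h2 ->
    thetai h1 i = thetai h2 i ->
    (forall l, l \in M -> valid_strat (s l)) ->
    consistent_h M s h1 -> consistent_h M s h2 ->
    forall th1 th2 : tprofile,
      in_Theta h1 th1 -> in_Theta h2 th2 ->
      consistent_theta M s th1 -> consistent_theta M s th2 ->
      @R j (th1 j) (f th1) (f th2).

End GradualMechanisms.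

Definition complete_rel (X : Type) (r : rel X) : Prop := forall x y, r x y || r y x.

Definition strategy_proof (Agent : finType) (Theta : Agent -> finType) (X : finType)
  (R : forall i : Agent, Theta i -> rel X) (f : tprofile Theta -> X) : Prop :=
  forall (i : Agent) (th th' : tprofile Theta),
    (forall j, j != i -> th j = th' j) -> R i (th i) (f th) (f th').

(* Main.v *)
Require Import Defs.
From mathcomp Require Import all_boot.
Set Implicit Arguments. Unset Strict Implicit. Unset Printing Implicit Defensive.

Lemma first_diff (T : eqType) (x0 : T) (s1 s2 : seq T) :
  ~~ prefix s1 s2 -> ~~ prefix s2 s1 ->
  exists n, [/\ n < size s1, n < size s2, take n s1 = take n s2 & nth x0 s1 n != nth x0 s2 n].
Proof.
elim: s1 s2 => [|a s1 IH] [|b s2] //=.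
case: (eqVneq a b) => [<-|ab] /=; rewrite ?eqxx /= => H1 H2.
  have [n [? ? ? ?]] := IH _ H1 H2. by exists n.+1; split => //=; congr cons.
by exists 0.
Qed.

Lemma prefix_rconsP (T : eqType) (u v : seq T) (a : T) :
  prefix u (rcons v a) -> u = rcons v a \/ prefix u v.
Proof.
case/prefixP => w; case/lastP: w => [|w b]; first by rewrite cats0 => ->; left.
rewrite -rcons_cat => /rcons_inj [-> _]; right; exact: prefix_prefix.
Qed.

Lemma prefix_total (T : eqType) (u v z : seq T) :
  prefix u z -> prefix v z -> prefix u v || prefix v u.
Proof.
move=> pu pv.
have /eqP eu : take (size u) z == u by rewrite -prefixE.
have /eqP ev : take (size v) z == v by rewrite -prefixE.
case: (leqP (size u) (size v)) => H.
  apply/orP; left; rewrite prefixE; apply/eqP.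
  by rewrite -ev take_takel // eu.
apply/orP; right; rewrite prefixE; apply/eqP.
by rewrite -eu take_takel ?ev // ltnW.
Qed.

Section S.
Variables (Agent : finType) (Theta : Agent -> finType) (X : finType) (G : game Theta X).
Implicit Types (h u v z : history Theta) (a : aprofile Theta).

Lemma size_prefixes h : size (prefixes h) = size h.
Proof. by rewrite /prefixes size_map size_iota. Qed.

Lemma prefixes_rcons h a : prefixes (rcons h a) = rcons (prefixes h) h.
Proof.
rewrite /prefixes size_rcons -addn1 iotaD add0n map_cat /= cats1; congr rcons.
  apply/eq_in_map => k; rewrite mem_iota add0n => /andP[_ kh].
  by rewrite -cats1 takel_cat // ltnW.
by rewrite -cats1 take_size_cat.
Qed.

Lemma E_rcons l h a : experience G l (rcons h a) =
  experience G l h ++ (if l \in mover G h then [:: (info G l h, a l)] else [::]).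
Proof.
rewrite /experience prefixes_rcons zip_rcons ?size_prefixes // filter_rcons /=.
by case: ifP => _; rewrite ?cats0 // map_rcons cats1.
Qed.

Lemma E_prefix l u v : prefix u v -> prefix (experience G l u) (experience G l v).
Proof.
elim/last_ind: v => [|v b IH]; first by rewrite prefixs0 => /eqP ->.
case/prefix_rconsP => [-> | /IH]; first exact: prefix_refl.
move=> H; rewrite E_rcons; exact: prefix_catl.
Qed.

Lemma E_step l u b v : prefix (rcons u b) v -> l \in mover G u ->
  prefix (rcons (experience G l u) (info G l u, b l)) (experience G l v).
Proof.
move=> /(E_prefix l) H m; apply: prefix_trans H; rewrite E_rcons m cats1; exact: prefix_refl.
Qed.

Lemma E_lt l u v : prefix u v -> u != v -> l \in mover G u ->
  size (experience G l u) < size (experience G l v).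
Proof.
move=> puv nuv m.
have su : size u < size v.
  rewrite ltn_neqAle size_prefix // andbT; apply: contra nuv => /eqP e.
  by move: puv; rewrite prefixE e take_size eq_sym.
have e1 : rcons u (nth [ffun => None] v (size u)) = take (size u).+1 v.
  rewrite (take_nth [ffun => None] su); congr rcons.
  by apply/esym/eqP; rewrite -prefixE.
have := E_step (l:=l) (b := nth [ffun => None] v (size u)) (v:=v) _ m.
rewrite e1 => /(_ (prefix_take _ _)) /size_prefix; by rewrite size_rcons.
Qed.

Definition d0 l : nat * option {set Theta l} := (0, None).
Definition a0 : aprofile Theta := [ffun => None].

Lemma E_pos l z n : n < size (experience G l z) ->
  exists u, [/\ prefix u z, size u < size z, l \in mover G u,
     experience G l u = take n (experience G l z) &
     nth (d0 l) (experience G l z) n = (info G l u, (nth a0 z (size u)) l)].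
Proof.
elim/last_ind: z n => [|z b IH] n; first by rewrite /experience.
rewrite E_rcons size_cat => Hn.
case: (ltnP n (size (experience G l z))) => Hlt.
  have [u [p1 p2 p3 p4 p5]] := IH _ Hlt.
  exists u; split => //.
  - apply: prefix_trans p1 _; exact: prefix_rcons.
  - by rewrite size_rcons ltnS ltnW.
  - by rewrite takel_cat // ltnW.
  - by rewrite nth_cat Hlt p5 nth_rcons p2.
move: Hn; case: ifP => m /=; last by rewrite addn0 => Hn; move: (leq_trans Hn Hlt); rewrite ltnn.
rewrite addn1 ltnS => Hn; have e : n = size (experience G l z) by apply/eqP; rewrite eqn_leq Hn Hlt.
exists z; split => //.
- exact: prefix_rcons.
- by rewrite size_rcons.
- by rewrite e take_size_cat.
- by rewrite nth_cat e ltnn subnn /= nth_rcons ltnn eqxx.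
Qed.


Hypothesis Hroot : [::] \in tree G.
Hypothesis Hpre : forall h a, rcons h a \in tree G -> h \in tree G.
Hypothesis Hmov0 : mover G [::] = setT.
Hypothesis Hval : forall h, nonterminal G h -> forall a, (rcons h a \in tree G) = valid_aprofile G h a.
Hypothesis Hinfo : forall i h h', dnode G i h -> dnode G i h' -> info G i h = info G i h' -> avail G h i = avail G h' i.
Hypothesis Hrecall : forall i h h', dnode G i h -> dnode G i h' -> info G i h = info G i h' -> experience G i h = experience G i h'.
Hypothesis Havne : forall i h, dnode G i h -> avail G h i != set0.
Hypothesis Hne : forall i h, dnode G i h -> forall A, A \in avail G h i -> A != set0.
Hypothesis Hdisj : forall i h, dnode G i h -> forall A B, A \in avail G h i -> B \in avail G h i -> A != B -> [disjoint A & B].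
Hypothesis Hunion : forall i h, dnode G i h -> \bigcup_(A in avail G h i) A = thetai h i.

Lemma tree_prefix z u : z \in tree G -> prefix u z -> u \in tree G.
Proof.
elim/last_ind: z u => [|z b IH] u; first by move=> H; rewrite prefixs0 => /eqP ->.
move=> Hz /prefix_rconsP [-> //|]; apply: IH; exact: Hpre Hz.
Qed.

Lemma rcons_tree h a : rcons h a \in tree G -> nonterminal G h /\ valid_aprofile G h a.
Proof.
move=> H; have nt : nonterminal G h by rewrite /nonterminal (Hpre H); apply/existsP; exists a.
by split => //; rewrite -Hval.
Qed.

Lemma take_prefix_nth (z u : history Theta) : prefix u z -> size u < size z ->
  take (size u).+1 z = rcons u (nth a0 z (size u)).
Proof.
move=> pu su; rewrite (take_nth a0 su); congr rcons; apply/eqP; by rewrite -prefixE.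
Qed.

Lemma nonterm_prefix z u : z \in tree G -> prefix u z -> size u < size z -> nonterminal G u.
Proof.
move=> Hz pu su.
have : rcons u (nth a0 z (size u)) \in tree G.
  by rewrite -take_prefix_nth //; exact: tree_prefix Hz (prefix_take _ _).
by case/rcons_tree.
Qed.

Lemma valid_act h a l : valid_aprofile G h a ->
  if l \in mover G h then (if a l is Some x then x \in avail G h l else false) else a l == None.
Proof. by move/forallP. Qed.

Lemma thetai_rcons h a l : thetai (rcons h a) l = if a l is Some x then x else thetai h l.
Proof. by rewrite /thetai foldl_rcons. Qed.

Definition lastact l (e : seq (nat * option {set Theta l})) : {set Theta l} :=
  foldl (fun acc p => if p.2 is Some x then x else acc) setT e.

Lemma thetai_E l h : h \in tree G -> thetai h l = lastact (experience G l h).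
Proof.
elim/last_ind: h => [|h b IH] // Hh.
rewrite thetai_rcons E_rcons; have [nt va] := rcons_tree Hh.
have := valid_act l va; rewrite /lastact in IH *; rewrite foldl_cat -IH ?(Hpre Hh) //.
case: ifP => m /=.
  by case: (b l).
by move/eqP ->.
Qed.

Lemma thetai_sub h a l : rcons h a \in tree G -> thetai (rcons h a) l \subset thetai h l.
Proof.
move=> Hh; have [nt va] := rcons_tree Hh; rewrite thetai_rcons.
have := valid_act l va; case: ifP => m; last by move/eqP ->.
case Ea: (a l) => [x|] // xa.
have dn : dnode G l h by rewrite /dnode nt m.
rewrite -(Hunion dn); exact: bigcup_sup.
Qed.

Lemma thetai_mono z u l : z \in tree G -> prefix u z -> thetai z l \subset thetai u l.
Proof.
elim/last_ind: z => [|z b IH] Hz; first by rewrite prefixs0 => /eqP ->; exact: subxx.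
case/prefix_rconsP => [-> | pu]; first exact: subxx.
exact: subset_trans (thetai_sub _ Hz) (IH (Hpre Hz) pu).
Qed.

Lemma inTheta_mono z u th : z \in tree G -> prefix u z -> in_Theta z th -> in_Theta u th.
Proof. move=> Hz pu H l; exact: (subsetP (thetai_mono l Hz pu)) (H l). Qed.


Lemma term_nonterm h : terminal G h -> nonterminal G h = false.
Proof.
case/andP => _ /forallP H; apply/negbTE; rewrite negb_and negb_exists; apply/orP; right.
by apply/forallP => a; exact: H.
Qed.

Lemma tree_size h : h \in tree G -> size h < size (tree G).
Proof.
move=> Hh.
have U : uniq [seq take k h | k <- iota 0 (size h).+1].
  rewrite map_inj_in_uniq ?iota_uniq // => k1 k2; rewrite !mem_iota !add0n !ltnS => k1h k2h e.
  by rewrite -(size_takel k1h) e size_takel.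
have := uniq_leq_size U; rewrite size_map size_iota; apply => x /mapP [k _ ->].
exact: tree_prefix Hh (prefix_take _ _).
Qed.

Lemma step_term (s : sprofile Theta) h : terminal G h -> step G s h = h.
Proof. by move=> Ht; rewrite /step term_nonterm. Qed.

Lemma valid_act_of (s : sprofile Theta) h : valid_sprofile G s -> nonterminal G h ->
  valid_aprofile G h (act_of G s h).
Proof.
move=> vs nt; apply/forallP => l; rewrite ffunE; case: ifP => m; rewrite ?m //.
have dn : dnode G l h by rewrite /dnode nt m.
exact: (vs l h dn).
Qed.

Lemma intree_nonterm h : h \in tree G -> terminal G h || nonterminal G h.
Proof.
move=> Hh; rewrite /terminal /nonterminal Hh /=.
by case: existsP => [//| H]; rewrite ?orbF ?orbT //=; apply/forallP => a; apply/negP => Ha; apply: H; exists a.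
Qed.

Lemma play_inv (s : sprofile Theta) n : valid_sprofile G s ->
  let h := iter n (step G s) [::] in
  [/\ h \in tree G, (size h = n \/ terminal G h) &
      forall m, m < size h -> nth a0 h m = act_of G s (take m h)].
Proof.
move=> vs; elim: n => [|n [IH1 IH2 IH3]] /=; first by split => //; left.
set h := iter n _ _ in IH1 IH2 IH3 *.
case/orP: (intree_nonterm IH1) => Ht.
  by rewrite step_term //; split => //; right.
rewrite /step Ht; split.
- by rewrite Hval // valid_act_of.
- by rewrite size_rcons; case: IH2 => [->|/term_nonterm]; [left | rewrite Ht].
- move=> m; rewrite size_rcons ltnS leq_eqVlt => /orP [/eqP ->|mh].
    by rewrite nth_rcons ltnn eqxx -cats1 take_size_cat.
  by rewrite nth_rcons mh -cats1 takel_cat ?IH3 // ltnW.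
Qed.

Lemma play_tree (s : sprofile Theta) : valid_sprofile G s -> play G s \in tree G.
Proof. by move=> vs; case: (play_inv (size (tree G)) vs). Qed.

Lemma play_terminal (s : sprofile Theta) : valid_sprofile G s -> terminal G (play G s).
Proof.
move=> vs; case: (play_inv (size (tree G)) vs) => H1 [H2|//] _.
by move: (tree_size H1); rewrite /play H2 ltnn.
Qed.

Lemma play_nth (s : sprofile Theta) u : valid_sprofile G s -> prefix u (play G s) ->
  size u < size (play G s) -> nth a0 (play G s) (size u) = act_of G s u.
Proof.
move=> vs pu su; case: (play_inv (size (tree G)) vs) => _ _ /(_ _ su) ->.
by congr act_of; apply/eqP; rewrite -prefixE.
Qed.

Lemma iter_prefix (s : sprofile Theta) n m : n <= m ->
  prefix (iter n (step G s) [::]) (iter m (step G s) [::]).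
Proof.
move/subnK <-; elim: (m - n) => [|k IH]; first exact: prefix_refl.
apply: prefix_trans IH _; rewrite addSn /= /step; case: ifP => _; [exact: prefix_rcons | exact: prefix_refl].
Qed.

Lemma iter_ge (s : sprofile Theta) n : valid_sprofile G s -> size (tree G) <= n ->
  iter n (step G s) [::] = play G s.
Proof.
move=> vs /subnK <-; rewrite iterD; elim: (n - _) => [//|k IH] /=.
by rewrite IH step_term // play_terminal.
Qed.

Lemma play_eq (S t : sprofile Theta) : valid_sprofile G t ->
  (forall u l, prefix u (play G t) -> nonterminal G u -> l \in mover G u ->
     S l (info G l u) = t l (info G l u)) -> play G S = play G t.
Proof.
move=> vt H.
suff E : forall n, iter n (step G S) [::] = iter n (step G t) [::] by rewrite /play E.
elim=> [//|n IH] /=; rewrite IH /step; case: ifP => nt //; congr rcons.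
apply/ffunP => l; rewrite !ffunE; case: ifP => m //; congr Some; apply: H m => //.
case: (leqP n (size (tree G))) => hn; first exact: iter_prefix.
by move: nt; rewrite iter_ge ?term_nonterm ?play_terminal // ltnW.
Qed.


Lemma prefix_lt (u v : history Theta) : prefix u v -> u != v -> size u < size v.
Proof.
move=> puv nuv; rewrite ltn_neqAle size_prefix // andbT; apply: contra nuv => /eqP e.
by move: puv; rewrite prefixE e take_size eq_sym.
Qed.

Lemma dnode_tree l h : dnode G l h -> h \in tree G.
Proof. by case/andP => /andP []. Qed.

Lemma dnode_nt l h : dnode G l h -> nonterminal G h.
Proof. by case/andP. Qed.

Lemma nt_neq u z : nonterminal G u -> terminal G z -> u != z.
Proof. by move=> nt tz; apply/eqP => e; rewrite e term_nonterm in nt. Qed.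

Lemma term_prefix_eq z w : terminal G z -> w \in tree G -> prefix z w -> z = w.
Proof.
move=> tz Hw pzw; apply/eqP; apply/negPn/negP => nzw.
have := nonterm_prefix Hw pzw (prefix_lt pzw nzw); by rewrite term_nonterm.
Qed.

Lemma chain h z th : h \in tree G -> z \in tree G -> terminal G z ->
  in_Theta h th -> in_Theta z th -> prefix h z.
Proof.
move=> Hh Hz Tz ih iz; apply/negPn/negP => nhz.
case: (boolP (prefix z h)) => pzh.
  have nzh : z != h by apply: contra nhz => /eqP ->; exact: prefix_refl.
  have := nonterm_prefix Hh pzh (prefix_lt pzh nzh); by rewrite term_nonterm.
have [n [n1 n2 et ne]] := first_diff a0 nhz pzh.
set p := take n h.
have Ea : take n.+1 h = rcons p (nth a0 h n) by rewrite /p -take_nth.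
have Eb : take n.+1 z = rcons p (nth a0 z n) by rewrite /p et -take_nth.
have Ha : rcons p (nth a0 h n) \in tree G by rewrite -Ea; exact: tree_prefix Hh (prefix_take _ _).
have Hb : rcons p (nth a0 z n) \in tree G by rewrite -Eb; exact: tree_prefix Hz (prefix_take _ _).
have [nt va] := rcons_tree Ha; have [_ vb] := rcons_tree Hb.
have [l nel] : exists l, nth a0 h n l != nth a0 z n l.
  case: (pickP (fun l => nth a0 h n l != nth a0 z n l)) => [l Hl|H]; first by exists l.
  have : nth a0 h n = nth a0 z n.
    by apply/ffunP => l; apply/eqP; move/negbT: (H l); rewrite negbK.
  by move=> e; rewrite e eqxx in ne.
have tha : th l \in thetai (rcons p (nth a0 h n)) l.
  by apply: (inTheta_mono Hh _ ih); rewrite -Ea; exact: prefix_take.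
have thb : th l \in thetai (rcons p (nth a0 z n)) l.
  by apply: (inTheta_mono Hz _ iz); rewrite -Eb; exact: prefix_take.
rewrite !thetai_rcons in tha thb.
have := valid_act l va; have := valid_act l vb.
case: (boolP (l \in mover G p)) => m.
  case Eb': (nth a0 z n l) => [B|] // Bav; case Ea': (nth a0 h n l) => [A|] // Aav.
  rewrite Ea' Eb' in tha thb nel.
  have AB : A != B by apply: contra nel => /eqP ->.
  have dn : dnode G l p by rewrite /dnode nt m.
  by have := disjointFr (Hdisj dn Aav Bav AB) tha; rewrite thb.
by move/eqP => Eb' /eqP Ea'; rewrite Ea' Eb' eqxx in nel.
Qed.

Lemma theta_inhab l : nonterminal G [::] -> exists x : Theta l, true.
Proof.
move=> nt; have dn : dnode G l [::] by rewrite /dnode nt Hmov0 in_setT.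
have /set0Pn [A HA] := Havne dn.
by have /set0Pn [x _] := Hne dn HA; exists x.
Qed.

Lemma thetai_ne l h : nonterminal G [::] -> h \in tree G -> exists x, x \in thetai h l.
Proof.
move=> nt0; elim/last_ind: h => [|h b IH] Hh.
  by have [x _] := theta_inhab l nt0; exists x; rewrite /thetai /= in_setT.
have [nt va] := rcons_tree Hh; rewrite thetai_rcons.
have := valid_act l va; case: (boolP (l \in mover G h)) => m.
  case Eb: (b l) => [A|] // Aav.
  have dn : dnode G l h by rewrite /dnode nt m.
  by apply/set0Pn; exact: Hne Aav.
by move/eqP => ->; exact: IH (Hpre Hh).
Qed.

Lemma truth_play (s : sprofile Theta) d (t : Theta d) : valid_sprofile G s ->
  unconditional G t (s d) -> t \in thetai (play G s) d.
Proof.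
move=> vs unc; rewrite /play; elim: (size (tree G)) => [|n IH] /=; first by rewrite /thetai in_setT.
have [Hh _ _] := play_inv n vs.
rewrite /step; case: ifP => nt //; rewrite thetai_rcons ffunE.
case: ifP => m //; apply: unc => //; by rewrite /dnode nt m.
Qed.

Lemma choice_prof (P : forall l, pred (Theta l)) :
  (forall l, exists x, P l x) -> exists th : tprofile Theta, forall l, P l (th l).
Proof. by move=> H; exists (fun l => xchoose (H l)) => l; exact: xchooseP. Qed.

Definition upd (th : tprofile Theta) d (x : Theta d) : tprofile Theta :=
  fun l => if d =P l is ReflectT e then ecast l (Theta l) e x else th l.

Lemma upd_same th d (x : Theta d) : upd th x d = x.
Proof. by rewrite /upd; case: eqP => // e; rewrite (eq_axiomK e). Qed.

Lemma upd_other th d (x : Theta d) l : l != d -> upd th x l = th l.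
Proof. by move=> ne; rewrite /upd; case: eqP => // e; subst l; rewrite eqxx in ne. Qed.

Lemma inTheta_upd z th d (x : Theta d) : in_Theta z th -> x \in thetai z d -> in_Theta z (upd th x).
Proof.
move=> H Hx l; case: (eqVneq l d) => [->|ne]; first by rewrite upd_same.
by rewrite upd_other.
Qed.


Lemma prefix_size_eq (T : eqType) (u v : seq T) : prefix u v -> size u = size v -> u = v.
Proof. by rewrite prefixE => /eqP e se; rewrite -e se take_size. Qed.

Lemma no_between l k k1 x e : in_infoset G l k x -> in_infoset G l k1 e ->
  size (experience G l e) = (size (experience G l x)).+1 ->
  ~ (exists k'', iprec G l k k'' /\ iprec G l k'' k1).
Proof.
move=> /andP[dx /eqP ix] /andP[de /eqP ie] sz
  [k'' [[x' [y [/andP[dx' /eqP ix'] /andP[dy /eqP iy] pxy nxy]]]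
        [c [e' [/andP[dc /eqP ic] /andP[de' /eqP ie'] pce nce]]]]].
have e1 : experience G l x' = experience G l x by apply: Hrecall; rewrite ?ix ?ix'.
have e2 : experience G l y = experience G l c by apply: Hrecall; rewrite ?iy ?ic.
have e3 : experience G l e' = experience G l e by apply: Hrecall; rewrite ?ie ?ie'.
have h1 := E_lt pxy nxy (andP dx').2.
have h2 := E_lt pce nce (andP dc).2.
rewrite e1 e2 in h1; rewrite e3 sz ltnS in h2.
by move: (leq_trans h1 h2); rewrite ltnn.
Qed.

Lemma E_nil_root l u : experience G l u = [::] -> u = [::].
Proof.
move=> H; apply/eqP; apply/negPn/negP => nu.
have m0 : l \in mover G [::] by rewrite Hmov0 in_setT.
have nu' : [::] != u by rewrite eq_sym.
by have := E_lt (prefix0s u) nu' m0; rewrite H.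
Qed.

Definition lab l z : seq nat := map fst (experience G l z).

Lemma lab_node l z k : k \in lab l z ->
  exists u, [/\ prefix u z, size u < size z, l \in mover G u & info G l u = k].
Proof.
case/mapP => e /(nthP (d0 l)) [n Hn <-] ->.
have [u [pu su mu _ nu]] := E_pos Hn.
by exists u; split => //; rewrite nu.
Qed.

Lemma node_lab l z u : prefix u z -> size u < size z -> l \in mover G u ->
  info G l u \in lab l z.
Proof.
move=> pu su mu.
have pr : prefix (rcons u (nth a0 z (size u))) z by rewrite -take_prefix_nth //; exact: prefix_take.
rewrite /lab; have /prefixP [w ->] := E_step pr mu.
by apply/mapP; exists (info G l u, nth a0 z (size u) l) => //; rewrite mem_cat mem_rcons mem_head.
Qed.

Lemma comp_sub l z z' : z \in tree G -> z' \in tree G ->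
  prefix (experience G l z) (experience G l z') -> thetai z' l \subset thetai z l.
Proof.
move=> Hz Hz' pe; case: (ltnP (size (experience G l z)) (size (experience G l z'))) => H.
  have [u [pu su mu eu _]] := E_pos H.
  have eu' : experience G l u = experience G l z by rewrite eu; apply/eqP; rewrite -prefixE.
  have <- : thetai u l = thetai z l by rewrite !thetai_E ?eu' // (tree_prefix Hz' pu).
  exact: thetai_mono Hz' pu.
have e : experience G l z = experience G l z'.
  by apply: (prefix_size_eq pe); apply/eqP; rewrite eqn_leq H size_prefix.
by rewrite !thetai_E // e subxx.
Qed.

Lemma imm_shape l k k1 h : imm_succ G l k k1 -> in_infoset G l k1 h ->
  exists x, in_infoset G l k x /\
    experience G l h = rcons (experience G l x) (k, Some (thetai h l)).
Proof.
move=> [[x [y [/andP[dx /eqP ix] /andP[dy /eqP iy] pxy nxy]]] nb] /andP[dh /eqP ih].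
have Hy := dnode_tree dy; have Hh := dnode_tree dh.
have sxy := prefix_lt pxy nxy.
set b := nth a0 y (size x).
have pr : prefix (rcons x b) y by rewrite -take_prefix_nth //; exact: prefix_take.
have mx := (andP dx).2.
have eyh : experience G l y = experience G l h by apply: Hrecall; rewrite ?iy ?ih.
have st := E_step pr mx; rewrite eyh in st.
have [_ vb] := rcons_tree (tree_prefix Hy pr).
have := valid_act l vb; rewrite mx; case Eb: (b l) => [A|] // Aav.
rewrite Eb ix in st.
set p := size (experience G l x) in st.
have sp : p < size (experience G l h) by move/size_prefix: st; rewrite size_rcons.
suff sz : size (experience G l h) = p.+1.
  have eh : experience G l h = rcons (experience G l x) (k, Some A).
    by apply/esym; apply: (prefix_size_eq st); rewrite size_rcons sz.
  exists x; split; first by rewrite /in_infoset dx ix eqxx.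
  by rewrite eh thetai_E // eh /lastact -cats1 foldl_cat /= cats1.
apply/eqP; rewrite eqn_leq sp andbT leqNgt; apply/negP => lt.
have [c [pc sc mc ec nc]] := E_pos lt.
have [a' [pa sa ma ea na]] := E_pos sp.
have nthp : nth (d0 l) (experience G l h) p = (k, Some A).
  move: st; rewrite prefixE size_rcons => /eqP st.
  by rewrite -(nth_take (d0 l) (ltnSn p)) st nth_rcons ltnn eqxx.
rewrite nthp in na; case: na => ia _.
have da : dnode G l a' by rewrite /dnode (nonterm_prefix Hh pa sa) ma.
have dc : dnode G l c by rewrite /dnode (nonterm_prefix Hh pc sc) mc.
have sea : size (experience G l a') = p by rewrite ea size_takel // ltnW.
have sec : size (experience G l c) = p.+1 by rewrite ec size_takel // ltnW.
apply: nb; exists (info G l c); split.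
  exists a', c; split.
  - by rewrite /in_infoset da ia eqxx.
  - by rewrite /in_infoset dc eqxx.
  - case/orP: (prefix_total pa pc) => // /(E_prefix l) /size_prefix.
    by rewrite sea sec ltnn.
  - by apply/eqP => e; move: sea; rewrite e sec => H; exact: (n_Sn _ (esym H)).
exists c, h; split.
- by rewrite /in_infoset dc eqxx.
- by rewrite /in_infoset dh ih eqxx.
- exact: pc.
- by apply/eqP => e; move: sc; rewrite e ltnn.
Qed.


Variables (f : tprofile Theta -> X) (R : forall i : Agent, Theta i -> rel X).
Hypothesis Hout : forall z th, terminal G z -> in_Theta z th -> outc G z = f th.
Hypothesis Hrefl : forall i (t : Theta i) x, R t x x.
Hypothesis HSP : strategy_proof R f.

Lemma RP_IC : reaction_proof G R f -> incentive_compatible G R.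
Proof.
move=> RP d tau s s' vs vs' ag unc.
rewrite /outcome.
have Tz := play_terminal vs; have Tz' := play_terminal vs'.
have Hz := play_tree vs; have Hz' := play_tree vs'.
case: (boolP (nonterminal G [::])) => nt0; last first.
  have T0 : terminal G [::] by move: (intree_nonterm Hroot); rewrite (negbTE nt0) orbF.
  have e : forall t : sprofile Theta, play G t = [::].
    move=> t; rewrite /play; elim: (size (tree G)) => //= n ->; exact: step_term.
  by rewrite !e.
set z := play G s in Tz Hz *; set z' := play G s' in Tz' Hz' *.
have tz : tau \in thetai z d := truth_play vs unc.
have [th0 Hth0] := choice_prof (P := fun l x => x \in thetai z l) (fun l => thetai_ne l nt0 Hz).
set th1 := upd th0 tau.
have i1 : in_Theta z th1 := inTheta_upd Hth0 tz.
have o1 : outc G z = f th1 := Hout Tz i1.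
rewrite o1.
case: (boolP [forall l, (l != d) ==> (prefix (experience G l z) (experience G l z') ||
                                     prefix (experience G l z') (experience G l z))]) => Hc.
  have Hex : forall l, exists x, (x \in thetai z' l) && ((l != d) ==> (x \in thetai z l)).
    move=> l; case: (eqVneq l d) => [->|nl].
      by have [x Hx] := thetai_ne d nt0 Hz'; exists x; rewrite Hx.
    have := forallP Hc l; rewrite nl /= => /orP [p|p].
      have [x Hx] := thetai_ne l nt0 Hz'; exists x; rewrite Hx /=.
      exact: (subsetP (comp_sub Hz Hz' p)).
    have [x Hx] := thetai_ne l nt0 Hz; exists x; rewrite Hx andbT.
    exact: (subsetP (comp_sub Hz' Hz p)).
  have [th' Hth'] := choice_prof
    (P := fun l x => (x \in thetai z' l) && ((l != d) ==> (x \in thetai z l))) Hex.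
  have i' : in_Theta z' th' by move=> l; case/andP: (Hth' l).
  set th'' := upd th' tau.
  have i'' : in_Theta z th''.
    move=> l; case: (eqVneq l d) => [->|nl]; first by rewrite /th'' upd_same.
    by rewrite /th'' upd_other //; case/andP: (Hth' l) => _; rewrite nl.
  rewrite -o1 (Hout Tz i'') (Hout Tz' i').
  have := HSP (i:=d) (th:=th'') (th':=th') _; rewrite /th'' upd_same; apply.
  by move=> j nj; rewrite /th'' upd_other.
rewrite negb_forall in Hc; case/existsP: Hc => l; rewrite negb_imply negb_or => /andP [nld /andP [np1 np2]].
have [n [n1 n2 et ne]] := first_diff (d0 l) np1 np2.
have [u1 [pu1 su1 mu1 eu1 nu1]] := E_pos n1.
have [u2 [pu2 su2 mu2 eu2 nu2]] := E_pos n2.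
rewrite (play_nth vs pu1 su1) ffunE mu1 in nu1.
rewrite (play_nth vs' pu2 su2) ffunE mu2 in nu2.
have sl : s l =1 s' l := ag l nld.
have nk : info G l u1 != info G l u2.
  by apply: contra ne => /eqP e; rewrite nu1 nu2 e sl.
have du1 : dnode G l u1 by rewrite /dnode (nonterm_prefix Hz pu1 su1) mu1.
have du2 : dnode G l u2 by rewrite /dnode (nonterm_prefix Hz' pu2 su2) mu2.
have eE : experience G l u1 = experience G l u2 by rewrite eu1 eu2 et.
have [th2 Hth2] := choice_prof (P := fun l x => x \in thetai z' l) (fun l => thetai_ne l nt0 Hz').
have in1 : in_infoset G l (info G l u1) u1 by rewrite /in_infoset du1 eqxx.
have in2 : in_infoset G l (info G l u2) u2 by rewrite /in_infoset du2 eqxx.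
case: n n1 n2 et ne eu1 eu2 nu1 nu2 eE => [|n'] n1 n2 et ne eu1 eu2 nu1 nu2 eE.
  rewrite take0 in eu1; rewrite take0 in eu2; have e1 := E_nil_root eu1; have e2 := E_nil_root eu2.
  by move: nk; rewrite e1 e2 eqxx.
have [a [pa sa ma ea na]] := E_pos (ltnW n1).
have [b [pb sb mb eb nb]] := E_pos (ltnW n2).
have kab : info G l a = info G l b.
  have : nth (d0 l) (experience G l z) n' = nth (d0 l) (experience G l z') n'.
    by rewrite -(nth_take _ (ltnSn n') (experience G l z)) et nth_take.
  by rewrite na nb => -[].
have da : dnode G l a by rewrite /dnode (nonterm_prefix Hz pa sa) ma.
have db : dnode G l b by rewrite /dnode (nonterm_prefix Hz' pb sb) mb.
have ina : in_infoset G l (info G l a) a by rewrite /in_infoset da eqxx.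
have inb : in_infoset G l (info G l a) b by rewrite /in_infoset db kab eqxx.
have sea : size (experience G l a) = n' by rewrite ea size_takel // ltnW // ltnW.
have seb : size (experience G l b) = n' by rewrite eb size_takel // ltnW // ltnW.
have seu1 : size (experience G l u1) = n'.+1 by rewrite eu1 size_takel // ltnW.
have seu2 : size (experience G l u2) = n'.+1 by rewrite eu2 size_takel // ltnW.
have imm1 : imm_succ G l (info G l a) (info G l u1).
  split; last by apply: (no_between ina in1); rewrite seu1 sea.
  exists a, u1; split => //.
    case/orP: (prefix_total pa pu1) => // /(E_prefix l) /size_prefix.
    by rewrite sea seu1 ltnn.
  by apply/eqP => e; move: sea; rewrite e seu1 => H; exact: (n_Sn _ (esym H)).
have imm2 : imm_succ G l (info G l a) (info G l u2).
  split; last by apply: (no_between inb in2); rewrite seu2 seb.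
  exists b, u2; split => //.
    case/orP: (prefix_total pb pu2) => // /(E_prefix l) /size_prefix.
    by rewrite seb seu2 ltnn.
  by apply/eqP => e; move: seb; rewrite e seu2 => H; exact: (n_Sn _ (esym H)).
have eth : thetai u1 l = thetai u2 l.
  by rewrite !thetai_E ?eE // ?(dnode_tree du1) ?(dnode_tree du2).
have vM : forall l0, l0 \in setT :\ l :\ d -> valid_strat G (s l0) by move=> l0 _; exact: vs.
have agM : forall j0, j0 \in setT :\ l :\ d -> s j0 =1 s' j0.
  by move=> j0 /setD1P [nj0 _]; exact: ag.
have c1 : consistent_h G (setT :\ l :\ d) s u1 by exists s; split.
have c2 : consistent_h G (setT :\ l :\ d) s u2 by exists s'; split.
have ct1 : consistent_theta G (setT :\ l :\ d) s th1.
  by exists z; split => //; exists s; split => //; exact: prefix_refl.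
have ct2 : consistent_theta G (setT :\ l :\ d) s th2.
  by exists z'; split => //; exists s'; split => //; exact: prefix_refl.
have := RP l d nld (info G l a) (info G l u1) (info G l u2) u1 u2 s nk imm1 imm2 in1 in2 eth vM c1 c2
  th1 th2 (inTheta_mono Hz pu1 i1) (inTheta_mono Hz' pu2 Hth2) ct1 ct2.
by rewrite /th1 upd_same (Hout Tz' Hth2).
Qed.


Definition tpick l (x : Theta l) (k : nat) : {set Theta l} :=
  let h0 := head [::] [seq h <- tree G | dnode G l h && (info G l h == k)] in
  if [pick A in avail G h0 l | x \in A] is Some A then A
  else if [pick A in avail G h0 l] is Some A then A else set0.

Lemma tpick_node l k h : dnode G l h -> info G l h = k ->
  let h0 := head [::] [seq h <- tree G | dnode G l h && (info G l h == k)] in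
  dnode G l h0 /\ info G l h0 = k.
Proof.
move=> dh ih /=.
have : h \in [seq h <- tree G | dnode G l h && (info G l h == k)].
  by rewrite mem_filter dh ih eqxx (dnode_tree dh).
case Ehs: [seq _ <- _ | _] => [//|h0 hs'] _ /=.
have : h0 \in [seq h <- tree G | dnode G l h && (info G l h == k)] by rewrite Ehs mem_head.
by rewrite mem_filter => /andP [/andP [d0h /eqP i0] _].
Qed.

Lemma tpick_valid l (x : Theta l) h : dnode G l h -> tpick x (info G l h) \in avail G h l.
Proof.
move=> dh; rewrite /tpick; have [d0h i0] := tpick_node dh (erefl _).
move: d0h i0; set h0 := head _ _ => d0h i0.
have ea : avail G h0 l = avail G h l by apply: Hinfo.
rewrite ea; case: pickP => [A /andP [HA _] //|_].
case: pickP => [A HA //|H]; exfalso.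
have /set0Pn [A HA] := Havne dh; by move: (H A); rewrite HA.
Qed.

Lemma tpick_unc l (x : Theta l) h : dnode G l h -> x \in thetai h l -> x \in tpick x (info G l h).
Proof.
move=> dh xh; rewrite /tpick; have [d0h i0] := tpick_node dh (erefl _).
move: d0h i0; set h0 := head _ _ => d0h i0.
have et : thetai h0 l = thetai h l.
  by rewrite !thetai_E ?(dnode_tree dh) ?(dnode_tree d0h) // (Hrecall d0h dh i0).
rewrite -et -(Hunion d0h) in xh; case/bigcupP: xh => A HA xA.
by case: pickP => [A' /andP[_ xA'] // | H]; move: (H A); rewrite HA xA.
Qed.

Lemma E_node l u z : prefix u z -> size u < size z -> l \in mover G u ->
  [/\ take (size (experience G l u)) (experience G l z) = experience G l u,
      nth (d0 l) (experience G l z) (size (experience G l u)) = (info G l u, (nth a0 z (size u)) l)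
    & size (experience G l u) < size (experience G l z)].
Proof.
move=> pu su mu.
have pr : prefix (rcons u (nth a0 z (size u))) z by rewrite -take_prefix_nth //; exact: prefix_take.
have st := E_step pr mu.
have sl := size_prefix st; rewrite size_rcons in sl.
move: st; rewrite prefixE size_rcons => /eqP st.
split => //.
- by rewrite -(take_takel _ (leqnSn _)) st -cats1 take_size_cat.
- by rewrite -(nth_take _ (ltnSn _)) st nth_rcons ltnn eqxx.
Qed.

Lemma before_diff (T : Type) (x0 : T) (g : T -> nat) (e1 e2 : seq T) p q :
  take p e1 = take p e2 -> take q e1 = take q e2 -> g (nth x0 e1 p) = g (nth x0 e2 p) ->
  g (nth x0 e1 q) != g (nth x0 e2 q) -> p < q.
Proof.
move=> tp tq gp gq; case: (ltngtP p q) => // H.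
  by move: gq; rewrite -(nth_take x0 H e1) tp nth_take // eqxx.
by move: gq; rewrite -H gp eqxx.
Qed.

Lemma play_action (t : sprofile Theta) u l th : valid_sprofile G t ->
  prefix u (play G t) -> size u < size (play G t) -> l \in mover G u ->
  in_Theta (play G t) th -> th l \in t l (info G l u).
Proof.
move=> vt pu su mu it.
have pr : prefix (rcons u (nth a0 (play G t) (size u))) (play G t).
  by rewrite -take_prefix_nth //; exact: prefix_take.
have := inTheta_mono (play_tree vt) pr it l.
by rewrite thetai_rcons play_nth // ffunE mu.
Qed.

Lemma IC_RP : incentive_compatible G R -> reaction_proof G R f.
Proof.
move=> IC i j nij k k1 k2 h1 h2 s M nk imm1 imm2 in1 in2 eth vM _ _ th1 th2 it1 it2
  [z1 [tz1 iz1 [t1 [vt1 ag1 pz1]]]] [z2 [tz2 iz2 [t2 [vt2 ag2 pz2]]]].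
have ez1 : z1 = play G t1 := term_prefix_eq tz1 (play_tree vt1) pz1.
have ez2 : z2 = play G t2 := term_prefix_eq tz2 (play_tree vt2) pz2.
have Hz1 : z1 \in tree G by rewrite ez1 play_tree.
have Hz2 : z2 \in tree G by rewrite ez2 play_tree.
case/andP: (in1) => dh1 /eqP ih1; case/andP: (in2) => dh2 /eqP ih2.
have ph1 : prefix h1 z1 := chain (dnode_tree dh1) Hz1 tz1 it1 iz1.
have ph2 : prefix h2 z2 := chain (dnode_tree dh2) Hz2 tz2 it2 iz2.
have sh1 : size h1 < size z1 := prefix_lt ph1 (nt_neq (dnode_nt dh1) tz1).
have sh2 : size h2 < size z2 := prefix_lt ph2 (nt_neq (dnode_nt dh2) tz2).
have [x1 [inx1 ex1]] := imm_shape imm1 in1.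
have [x2 [inx2 ex2]] := imm_shape imm2 in2.
have ex12 : experience G i x1 = experience G i x2.
  apply: Hrecall (andP inx1).1 (andP inx2).1 _.
  by rewrite (eqP (andP inx1).2) (eqP (andP inx2).2).
have eh : experience G i h1 = experience G i h2 by rewrite ex1 ex2 ex12 eth.
have [tq1 nq1 _] := E_node ph1 sh1 (andP dh1).2.
have [tq2 nq2 _] := E_node ph2 sh2 (andP dh2).2.
rewrite -eh in tq2 nq2.
have cross : forall c, c \in lab i z1 -> c \in lab i z2 -> t1 i c = t2 i c.
  move=> c /lab_node [u1 [pu1 su1 mu1 iu1]] /lab_node [u2 [pu2 su2 mu2 iu2]].
  have du1 : dnode G i u1 by rewrite /dnode (nonterm_prefix Hz1 pu1 su1) mu1.
  have du2 : dnode G i u2 by rewrite /dnode (nonterm_prefix Hz2 pu2 su2) mu2.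
  have eu : experience G i u1 = experience G i u2 by apply: Hrecall; rewrite ?iu1 ?iu2.
  have [tp1 np1 _] := E_node pu1 su1 mu1.
  have [tp2 np2 _] := E_node pu2 su2 mu2.
  rewrite -eu in tp2 np2.
  have pu1' : prefix u1 (play G t1) by rewrite -ez1.
  have su1' : size u1 < size (play G t1) by rewrite -ez1.
  have pu2' : prefix u2 (play G t2) by rewrite -ez2.
  have su2' : size u2 < size (play G t2) by rewrite -ez2.
  have np1' : nth (d0 i) (experience G i z1) (size (experience G i u1)) = (c, Some (t1 i c)).
    by rewrite np1 {1}ez1 (play_nth vt1 pu1' su1') ffunE mu1 iu1.
  have np2' : nth (d0 i) (experience G i z2) (size (experience G i u1)) = (c, Some (t2 i c)).
    by rewrite np2 {1}ez2 (play_nth vt2 pu2' su2') ffunE mu2 iu2.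
  have pq : size (experience G i u1) < size (experience G i h1).
    apply: (before_diff (x0 := d0 i) (g := fst) (e1 := experience G i z1) (e2 := experience G i z2)).
    - by rewrite tp1 tp2.
    - by rewrite tq1 tq2.
    - by rewrite np1' np2'.
    - by rewrite nq1 nq2 /= ih1 ih2.
  have : nth (d0 i) (experience G i z1) (size (experience G i u1)) =
         nth (d0 i) (experience G i z2) (size (experience G i u1)).
    by rewrite -(nth_take _ pq) tq1 -{1}tq2 nth_take.
  by rewrite np1' np2' => -[].
pose S' : sprofile Theta := fun l c =>
  if l \in M then s l c else if c \in lab l z2 then t2 l c else t1 l c.
pose S : sprofile Theta := fun l c =>
  if l == j then (if c \in lab l z1 then t1 l c else tpick (th1 l) c) else S' l c.
have vS' : valid_sprofile G S'.
  move=> l h dh; rewrite /S'; case: ifP => lM; first exact: vM.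
  by case: ifP => _; [exact: vt2 | exact: vt1].
have vS : valid_sprofile G S.
  move=> l h dh; rewrite /S; case: ifP => _; last exact: vS'.
  by case: ifP => _; [exact: vt1 | exact: tpick_valid].
have agS : forall l, l != j -> S l =1 S' l by move=> l nl c; rewrite /S (negbTE nl).
have unc : unconditional G (th1 j) (S j).
  move=> h dh th; rewrite /S eqxx; case: ifP => Hk; last exact: tpick_unc.
  case/lab_node: Hk => u [pu su mu iu]; rewrite -iu.
  by rewrite ez1 in pu su iz1; exact: play_action.
have pS : play G S = z1.
  rewrite ez1; apply: (play_eq (S:=S) vt1) => u l pu nu mu.
  rewrite -ez1 in pu; have su := prefix_lt pu (nt_neq nu tz1).
  have Hl := node_lab pu su mu.
  rewrite /S /S' /=; case: (eqVneq l j) => [e|nlj]; first by subst l; rewrite Hl.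
  case: ifP => lM; first exact: ag1.
  have li : l = i.
    by apply/eqP; move: lM; rewrite /M !in_setD1 in_setT nlj andbT /= => /negbT; rewrite negbK.
  subst l; case: ifP => H2 //; symmetry; exact: cross.
have pS' : play G S' = z2.
  rewrite ez2; apply: (play_eq (S:=S') vt2) => u l pu nu mu.
  rewrite -ez2 in pu; have su := prefix_lt pu (nt_neq nu tz2).
  have Hl := node_lab pu su mu.
  rewrite /S'; case: ifP => lM; first exact: ag2.
  by rewrite Hl.
have := IC j (th1 j) S S' vS vS' agS unc.
by rewrite /outcome pS pS' (Hout tz1 iz1) (Hout tz2 iz2).
Qed.

End S.

Theorem theorem2 (Agent : finType) (Theta : Agent -> finType) (X : finType)
  (R : forall i : Agent, Theta i -> rel X) (f : tprofile Theta -> X)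
  (G : game Theta X) :
  (forall i (t : Theta i), complete_rel (R i t)) ->
  (forall i (t : Theta i), transitive (R i t)) ->
  strategy_proof R f -> is_GM G f ->
  incentive_compatible G R <-> reaction_proof G R f.
Proof.
move=> Hcomp _ HSP [[Hroot [Hpre [Hmov0 [Hnt [Hval [Havne [Hinfo Hrecall]]]]]]] Hne Hdisj Hunion Hout].
have Hrefl : forall i (t : Theta i) x, R i t x x by move=> i t x; have := Hcomp i t x x; rewrite orbb.
split.
  apply: IC_RP; eassumption.
apply: RP_IC; eassumption.
Qed.
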